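(* Let $G_1,\dots,G_n$ be groups and $G\leqslant G_1\times\dots\times G_n$ a subgroup such that each projection $G\to G_i$ is surjective. For $j\in\{1,\dots,n\}$ let $S_j=\{1,\dots,n\}\setminus\{j\}$, view $G$ as a subgroup of $G_j\times G_{S_j}$ (surjecting onto both factors), and let $Q_j=G_j/N_j$ be the associated Goursat quotient, where $N_j=\{x\in G_j:(x,1)\in G\}$. Then $G$ has abelian entanglements with respect to $G_1\times\dots\times G_n$ if and only if $Q_j$ is abelian for every $j\in\{1,\dots,n\}$.
   Context: For nonempty $S\subseteq\{1,\dots,n\}$, $G_S$ denotes the image of $G$ in $\prod_{i\in S}G_i$ (and $G_\emptyset$ is the trivial group). For a partition $\mathcal P=\{S,T\}$ of $\{1,\dots,n\}$ into two nonempty sets, $G\leqslant G_S\times G_T$ surjects onto both factors; with $N_S=\{x\in G_S:(x,1)\in G\}$ (normal in $G_S$) the Goursat quotient is $Q_{\mathcal P}=G_S/N_S$. $G$ has abelian entanglements with respect to $G_1\times\dots\times G_n$ if $Q_{\mathcal P}$ is abelian for every such partition $\mathcal P$. *)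

(* Defs.v *)
From mathcomp Require Import all_boot.

Set Implicit Arguments.
Unset Strict Implicit.
Unset Printing Implicit Defensive.

Record group := Group {
  carrier :> Type;
  gmul : carrier -> carrier -> carrier;
  ginv : carrier -> carrier;
  gone : carrier;
  gmulA : forall x y z, gmul x (gmul y z) = gmul (gmul x y) z;
  gmul1 : forall x, gmul gone x = x;
  gmulV : forall x, gmul (ginv x) x = gone
}.

Section Product.
Variables (n : nat) (Gs : 'I_n -> group).

Definition prodG := forall i : 'I_n, Gs i.
Definition pmul (x y : prodG) : prodG := fun i => gmul (x i) (y i).
Definition pinv (x : prodG) : prodG := fun i => ginv (x i).
Definition pone : prodG := fun i => gone (Gs i).

Definition is_subgroup (G : prodG -> Prop) : Prop :=
  [/\ G pone,
      forall x y, G x -> G y -> G (pmul x y)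
    & forall x, G x -> G (pinv x)].

(* Elements of prod_{i in S} G_i are represented by elements of prodG,
   where the coordinates outside S are irrelevant; two representatives
   denote the same element iff they agree on S. *)
Definition agree_on (S : {set 'I_n}) (x y : prodG) : Prop :=
  forall i, i \in S -> x i = y i.

Definition in_GS (G : prodG -> Prop) (S : {set 'I_n}) (x : prodG) : Prop :=
  exists g, G g /\ agree_on S g x.

Definition in_NS (G : prodG -> Prop) (S : {set 'I_n}) (x : prodG) : Prop :=
  exists g, [/\ G g, agree_on S g x & agree_on (~: S) g pone].

(* The Goursat quotient Q = G_S / N_S (T = complement of S) is abelian:
   for all x, y in G_S the cosets commute, i.e. (xy)(yx)^{-1} in N_S. *)
Definition goursat_quotient_abelian (G : prodG -> Prop) (S : {set 'I_n})
  : Prop :=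
  forall x y, in_GS G S x -> in_GS G S y ->
    in_NS G S (pmul (pmul x y) (pinv (pmul y x))).

(* G has abelian entanglements w.r.t. G_1 x ... x G_n: Q_P is abelian for
   every partition P = {S, T} of {1..n} into two nonempty sets. *)
Definition abelian_entanglements (G : prodG -> Prop) : Prop :=
  forall S : {set 'I_n}, S != set0 -> S != setT ->
    goursat_quotient_abelian G S.

End Product.

(* Main.v *)
Require Import Defs.
From mathcomp Require Import all_boot.

Section Aux.
Variable (K : group).
Lemma gmulVr (x : K) : gmul x (ginv x) = gone K.
Proof.
set y := gmul x (ginv x).
have yy : gmul y y = y.
  by rewrite /y -gmulA [gmul (ginv x) _]gmulA gmulV gmul1.
by rewrite -[y]gmul1 -(gmulV y) -gmulA yy.
Qed.
Lemma gmul1r (x : K) : gmul x (gone K) = x.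
Proof. by rewrite -(gmulV x) gmulA gmulVr gmul1. Qed.
End Aux.

Theorem corollary2p5 (n : nat) (Gs : 'I_n -> group) (G : prodG Gs -> Prop)
    (HG : is_subgroup G)
    (Hsurj : forall (i : 'I_n) (g : Gs i), exists x, G x /\ x i = g) :
  abelian_entanglements G <->
  (forall j : 'I_n, goursat_quotient_abelian G [set j]).
Proof.
case: HG => [G1 GM GV].
split.
- move=> AE j.
  case: (boolP ([set j] == setT)) => [/eqP -> | HT].
    move=> x y [gx [Gx Ax]] [gy [Gy Ay]].
    exists (pmul (pmul gx gy) (pinv (pmul gy gx))); split.
    + by apply: (GM); [apply: (GM) | apply: (GV); apply: (GM)].
    + by move=> i _; rewrite /pmul /pinv !Ax ?Ay ?in_setT.
    + by move=> i; rewrite in_setC in_setT.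
  apply: AE => //.
  by apply/set0Pn; exists j; rewrite in_set1.
- move=> H S _ _ x y _ _.
  set c := pmul (pmul x y) (pinv (pmul y x)).
  have Hj : forall j, exists h, G h /\ h j = c j /\ (forall i, i != j -> h i = gone (Gs i)).
    move=> j.
    have [x' [Gx' Ex]] := Hsurj j (x j).
    have [y' [Gy' Ey]] := Hsurj j (y j).
    have hx : in_GS G [set j] x.
      by exists x'; split => // i; rewrite in_set1 => /eqP ->.
    have hy : in_GS G [set j] y.
      by exists y'; split => // i; rewrite in_set1 => /eqP ->.
    have [h [Gh A1 A2]] := H j x y hx hy.
    exists h; split => //; split; first by apply: A1; rewrite in_set1.
    by move=> i Hi; apply: A2; rewrite in_setC in_set1.
  have Hs : forall s : seq 'I_n, exists g, G g /\
      (forall i, i \in s -> g i = c i) /\ (forall i, i \notin s -> g i = gone (Gs i)).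
    elim=> [|j s [g [Gg [E1 E2]]]].
      by exists (pone Gs); split.
    case: (boolP (j \in s)) => Hjs.
      exists g; split => //; split => i; rewrite in_cons.
        by case/orP => [/eqP -> |]; [exact: E1 | exact: E1].
      by rewrite negb_or => /andP [_]; exact: E2.
    have [h [Gh [Eh1 Eh2]]] := Hj j.
    exists (pmul g h); split; first exact: GM.
    split => i; rewrite in_cons /pmul.
      case: (eqVneq i j) => [-> _ | Hij /= His].
        by rewrite E2 // gmul1 Eh1.
      by rewrite E1 // Eh2 // gmul1r.
    case: (eqVneq i j) => //= Hij His.
    by rewrite E2 // Eh2 // gmul1.
  have [g [Gg [E1 E2]]] := Hs (enum S).
  exists g; split => // i Hi.
    by apply: E1; rewrite mem_enum.
  by apply: E2; rewrite mem_enum -in_setC.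
Qed.
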